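(* Let $\alpha=(\alpha_n)_{n\ge1}$ be a non-negative non-increasing null sequence with $\alpha_1\le1$, and let $\omega\in(0,1)$. The following are equivalent: (1) the principal Calkin space $\langle\alpha\rangle$ is stable; (2) $\alpha\otimes\alpha\in\langle\alpha\rangle$; (3) there exist $r\in\mathbb N$ and $C>0$ such that $\widetilde M^{(\omega)}_n(\alpha)\le C\,\widetilde K^{(\omega)}_{n+r}(\alpha)$ for every $n\in\mathbb N\cup\{0\}$.
   Context: $c_0$: complex null sequences; for $\beta\in c_0$, $\beta^\star$ is the non-increasing rearrangement of $(|\beta_n|)$. A Calkin space is a linear subspace $\mathfrak i\subseteq c_0$ such that $\gamma\in\mathfrak i,\beta\in c_0,\beta^\star\le\gamma^\star$ termwise imply $\beta\in\mathfrak i$. $\langle\alpha\rangle$ is the smallest Calkin space containing $\alpha$. For $\beta,\gamma\in c_0$, $\beta\otimes\gamma$ is the non-increasing rearrangement with multiplicities of $(|\beta_i\gamma_j|)_{i,j}$; a Calkin space $\mathfrak i$ is stable if the smallest Calkin space containing all $\beta\otimes\gamma$, $\beta,\gamma\in\mathfrak i$, equals $\mathfrak i$. For $n\ge0$: $K^{(\omega)}_n(\alpha)=|\{m:\omega^{n+1}<\alpha_m\le\omega^n\}|$, $\widetilde K^{(\omega)}_n(\alpha)=\sum_{i=0}^nK^{(\omega)}_i(\alpha)$, $M^{(\omega)}_n(\alpha)=\sum_{i+j=n}K^{(\omega)}_i(\alpha)K^{(\omega)}_j(\alpha)$, $\widetilde M^{(\omega)}_n(\alpha)=\sum_{i=0}^nM^{(\omega)}_i(\alpha)$.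 *)

(* Defs.v *)
From HB Require Import structures.
From mathcomp Require Import all_boot all_order all_algebra.
From mathcomp Require Import all_classical all_reals.
From mathcomp Require Import finmap.
From mathcomp.real_closed Require Import complex.
Set Implicit Arguments. Unset Strict Implicit. Unset Printing Implicit Defensive.
Import Order.TTheory GRing.Theory Num.Theory.
Local Open Scope ring_scope.
Local Open Scope classical_set_scope.

(* Complex sequences indexed by nat (index 0 = first term). *)
Section Defs.
Variable R : realType.
Local Notation C := (complex R).

Definition null_seq (b : nat -> C) : Prop :=
  forall e : R, 0 < e -> exists N : nat, forall n, (N <= n)%N -> Normc.normc (b n) < e.

(* non-increasing rearrangement (with multiplicity) of a non-negative family
   f indexed by T:  drearr f n = the (n+1)-th largest value of f (0-indexed),
   i.e. the supremum over all (n+1)-element sets of indices of the minimum of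
   f on that set. *)
Definition drearr (T : eqType) (f : T -> R) (n : nat) : R :=
  sup [set t : R | exists s : seq T,
        [/\ uniq s, size s = n.+1 & forall i, i \in s -> t <= f i]].

Definition rearr (b : nat -> C) : nat -> R := drearr (fun m => Normc.normc (b m)).

Definition cseq (a : nat -> R) : nat -> C := fun n => (a n)%:C%C.

Definition calkin (I : set (nat -> C)) : Prop :=
  [/\ I (fun _ => 0),
      (forall b g, I b -> I g -> I (fun n => b n + g n)),
      (forall (c : C) b, I b -> I (fun n => c * b n)),
      (forall b, I b -> null_seq b) &
      (forall g b, I g -> null_seq b -> (forall n, rearr b n <= rearr g n) -> I b)].

Definition calkin_hull (S : set (nat -> C)) : set (nat -> C) :=
  [set b | forall J, calkin J -> S `<=` J -> J b].

Definition principal (a : nat -> C) : set (nat -> C) := calkin_hull [set a].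

Definition tensor (b g : nat -> C) : nat -> R :=
  drearr (fun p : nat * nat => Normc.normc (b p.1) * Normc.normc (g p.2)).

Definition stable (I : set (nat -> C)) : Prop :=
  calkin_hull [set h | exists b g, [/\ I b, I g & h = cseq (tensor b g)]] = I.

Definition Kw (w : R) (a : nat -> R) (n : nat) : nat :=
  #|` fset_set [set m : nat | w ^+ n.+1 < a m <= w ^+ n] |.

Definition Kwt (w : R) (a : nat -> R) (n : nat) : nat :=
  \sum_(i < n.+1) Kw w a i.

Definition Mw (w : R) (a : nat -> R) (n : nat) : nat :=
  \sum_(i < n.+1) Kw w a i * Kw w a (n - i).

Definition Mwt (w : R) (a : nat -> R) (n : nat) : nat :=
  \sum_(i < n.+1) Mw w a i.
End Defs.

(* Main.v *)
Require Import Defs.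
From HB Require Import structures.
From mathcomp Require Import all_boot all_order all_algebra.
From mathcomp Require Import all_classical all_reals.
From mathcomp.real_closed Require Import complex.
From mathcomp Require Import finmap.
From mathcomp Require Import lra zify.
Import Order.TTheory GRing.Theory Num.Theory.
Local Open Scope ring_scope.
Local Open Scope classical_set_scope.
Set Implicit Arguments. Unset Strict Implicit. Unset Printing Implicit Defensive.
Section Gen.
Variable R : realType.

Definition Pc (T : eqType) (f : T -> R) (t : R) (n : nat) : Prop :=
  exists s : seq T, [/\ uniq s, size s = n.+1 & forall i, i \in s -> t < f i].

Lemma drearr_gtP (T : eqType) (f : T -> R) t n :
  0 <= t -> t < drearr f n -> Pc f t n.
Proof.
move=> t0 lt; move: lt; rewrite /drearr.
set E := [set _ | _] => lt.
have [hs|nhs] := pselect (has_sup E); last first.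
  by rewrite sup_out // in lt; move: (le_lt_trans t0 lt); rewrite ltxx.
have epos : 0 < sup E - t by rewrite subr_gt0.
have [e [s [us ss Hs]] He] := sup_adherent epos hs.
rewrite opprB addrCA subrr addr0 in He.
by exists s; split => // i /Hs; apply: lt_le_trans.
Qed.

Lemma drearr_ge (T : eqType) (f : T -> R) B n s x :
  (forall i, f i <= B) -> uniq s -> size s = n.+1 ->
  (forall i, i \in s -> x <= f i) -> x <= drearr f n.
Proof.
move=> fB us ss Hs; rewrite /drearr.
set E := [set _ | _].
have hs : has_sup E.
  split; first by exists x; exists s.
  exists B => y [s' [_ ss' Hs']].
  case: s' ss' Hs' => // i s' _ Hs'.
  by apply: le_trans (fB i); apply: Hs'; rewrite inE eqxx.
by apply: sup_upper_bound => //; exists s.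
Qed.

Lemma min_above (T : eqType) (f : T -> R) t (s : seq T) :
  (forall i, i \in s -> t < f i) -> exists2 x, t < x & forall i, i \in s -> x <= f i.
Proof.
elim: s => [|j s IH] H; first by exists (t + 1) => //; rewrite ltrDl ltr01.
have [|x tx Hx] := IH; first by move=> i iS; apply: H; rewrite inE iS orbT.
exists (Num.min x (f j)).
  by rewrite lt_min tx H // inE eqxx.
move=> i; rewrite inE => /orP[/eqP->|iS]; first by rewrite ge_min lexx orbT.
by rewrite ge_min Hx.
Qed.

Lemma Pc_drearr (T : eqType) (f : T -> R) B t n :
  (forall i, f i <= B) -> Pc f t n -> t < drearr f n.
Proof.
move=> fB [s [us ss Hs]].
have [x tx Hx] := min_above Hs.
by apply: lt_le_trans tx _; apply: drearr_ge fB us ss Hx.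
Qed.

Lemma drearr_le (T : eqType) (f : T -> R) n y :
  0 <= y -> ~ Pc f y n -> drearr f n <= y.
Proof.
move=> y0 nP; rewrite leNgt; apply/negP => /(drearr_gtP y0); exact: nP.
Qed.

Lemma Pc_mono (T : eqType) (f : T -> R) t n m :
  (n <= m)%N -> Pc f t m -> Pc f t n.
Proof.
move=> nm [s [us ss Hs]]; exists (take n.+1 s); split.
- exact: take_uniq.
- by rewrite size_take ss ltnS; case: ltngtP nm => // ->.
- by move=> i /mem_take; apply: Hs.
Qed.

Lemma drearr_ge0 (T : eqType) (f : T -> R) B n (s : seq T) :
  (forall i, 0 <= f i) -> (forall i, f i <= B) -> uniq s -> size s = n.+1 ->
  0 <= drearr f n.
Proof. by move=> f0 fB us ss; apply: (drearr_ge fB us ss) => i _. Qed.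

Lemma drearr_mono (T : eqType) (f : T -> R) B n m :
  (forall i, f i <= B) -> (n <= m)%N -> 0 <= drearr f n -> drearr f m <= drearr f n.
Proof.
move=> fB nm d0; apply: drearr_le => // /(Pc_mono nm) /(Pc_drearr fB).
by rewrite ltxx.
Qed.

Lemma drearr_ub (T : eqType) (f : T -> R) B n :
  0 <= B -> (forall i, f i <= B) -> drearr f n <= B.
Proof.
move=> B0 fB; apply: drearr_le => // [[[|i s] [_ //= _ Hs]]].
by move: (Hs i); rewrite inE eqxx => /(_ isT); rewrite ltNge fB.
Qed.

End Gen.
Lemma Pc_impl (R : realType) (T : eqType) (f g : T -> R) t t' n :
  Pc f t n -> (forall i, t < f i -> t' < g i) -> Pc g t' n.
Proof. by move=> [s [us ss Hs]] H; exists s; split => // i /Hs /H. Qed.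

Lemma Pc_split (R : realType) (T : eqType) (f g1 g2 : T -> R) t n :
  (forall i, f i <= g1 i + g2 i) -> Pc f t n ->
  Pc g1 (t / 2) n./2 \/ Pc g2 (t / 2) n./2.
Proof.
move=> fg [s [us ss Hs]].
pose p1 := fun i => t / 2 < g1 i; pose p2 := fun i => t / 2 < g2 i.
have cnt : (size s <= count p1 s + count p2 s)%N.
  rewrite -count_predUI -[size s]count_predT.
  apply: leq_trans (leq_addr _ _); rewrite leq_eqVlt; apply/orP; left.
  apply/eqP/eq_in_count => i /Hs ti /=; rewrite /p1 /p2; apply/esym/orP.
  case: (ltrP (t/2) (g1 i)) => h1; first by left.
  right; move: (lt_le_trans ti (fg i)) => h; lra.
have hh : (n./2 + n./2 <= n)%N.
  by rewrite addnn -{2}(odd_double_half n) leq_addl.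
have [c1|c1] := ltnP n./2 (count p1 s).
  left; exists (take n./2.+1 (seq.filter p1 s)); split.
  - by apply: take_uniq; apply: filter_uniq.
  - by rewrite size_take size_filter; case: ifP => // /negbT; lia.
  - by move=> i /mem_take; rewrite mem_filter => /andP[].
right; have c2 : (n./2 < count p2 s)%N by lia.
exists (take n./2.+1 (seq.filter p2 s)); split.
- by apply: take_uniq; apply: filter_uniq.
- by rewrite size_take size_filter; case: ifP => // /negbT; lia.
- by move=> i /mem_take; rewrite mem_filter => /andP[].
Qed.

Lemma uniq_big (s : seq nat) n :
  uniq s -> size s = n.+1 -> exists2 i, i \in s & (n <= i)%N.
Proof.
move=> us ss; have [/hasP[i iS ni]|/hasPn H] := boolP (has (fun i => n <= i)%N s).
  by exists i.
have : {subset s <= iota 0 n}.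
  by move=> i /H; rewrite -ltnNge mem_iota add0n.
move=> /(uniq_leq_size us); rewrite size_iota ss ltnn //.
Qed.

Section Seqs.
Variable R : realType.
Local Notation C := (complex R).
Local Notation nc := (@Normc.normc R).

Lemma nc_ge0 (x : C) : 0 <= nc x.
Proof. by case: x => u v; rewrite /Normc.normc sqrtr_ge0. Qed.

Lemma nc_real (x : R) : nc (x%:C)%C = `|x|.
Proof. by rewrite /Normc.normc /= expr0n /= addr0 sqrtr_sqr. Qed.

Lemma nc_cseq (x : nat -> R) n : 0 <= x n -> nc (cseq x n) = x n.
Proof. by move=> h; rewrite /cseq nc_real ger0_norm. Qed.

Lemma null_bounded (b : nat -> C) :
  null_seq b -> exists2 B, 0 <= B & forall n, nc (b n) <= B.
Proof.
move=> /(_ 1 ltr01) [N HN].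
have s0 : 0 <= \sum_(k < N) nc (b k) by rewrite sumr_ge0 // => k _; apply: nc_ge0.
exists (1 + \sum_(k < N) nc (b k)); first by rewrite addr_ge0.
move=> n; case: (ltnP n N) => [nN|Nn].
  rewrite (bigD1 (Ordinal nN)) //= addrCA lerDl addr_ge0 //.
  by rewrite sumr_ge0 // => k _; apply: nc_ge0.
by apply: le_trans (ltW (HN n Nn)) _; rewrite lerDl.
Qed.

Lemma drearr_nonincr (x : nat -> R) n :
  (forall n, 0 <= x n) -> (forall n m, (n <= m)%N -> x m <= x n) ->
  drearr x n = x n.
Proof.
move=> x0 xd; apply/le_anti/andP; split.
  apply: drearr_le => // -[s [us ss Hs]].
  have [i iS ni] := uniq_big us ss.
  by move: (Hs i iS); rewrite ltNge xd.
apply: (@drearr_ge _ _ _ (x 0%N) _ (iota 0 n.+1)).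
- by move=> i; apply: xd.
- exact: iota_uniq.
- by rewrite size_iota.
- by move=> i; rewrite mem_iota add0n ltnS => /xd.
Qed.

Lemma rearr_nc (b : nat -> C) (x : nat -> R) n :
  (forall m, nc (b m) = x m) -> rearr b n = drearr x n.
Proof. by move=> H; rewrite /rearr; congr drearr; apply: funext. Qed.

Lemma rearr_cseq (x : nat -> R) n :
  (forall n, 0 <= x n) -> (forall n m, (n <= m)%N -> x m <= x n) ->
  rearr (cseq x) n = x n.
Proof.
move=> x0 xd; rewrite (@rearr_nc _ x) ?drearr_nonincr // => m.
exact: nc_cseq.
Qed.

Lemma rearr_ge0 (b : nat -> C) n : null_seq b -> 0 <= rearr b n.
Proof.
move=> /null_bounded [B B0 HB].
apply: (@drearr_ge0 _ _ _ B _ (iota 0 n.+1)) => //.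
- by move=> i; apply: nc_ge0.
- exact: iota_uniq.
- by rewrite size_iota.
Qed.

Lemma calkin_null : calkin (@null_seq R).
Proof.
split.
- by move=> e e0; exists 0%N => n _; rewrite Normc.normc0.
- move=> b g nb ng e e0.
  have [N1 H1] := nb (e / 2) (divr_gt0 e0 (ltr0Sn _ 1)).
  have [N2 H2] := ng (e / 2) (divr_gt0 e0 (ltr0Sn _ 1)).
  exists (maxn N1 N2) => n hn; apply: le_lt_trans (le_normcD _ _) _.
  rewrite (splitr e) ltrD //; [apply: H1 | apply: H2]; lia.
- move=> c b nb e e0.
  have c1 : 0 < nc c + 1 by rewrite ltr_wpDl ?nc_ge0.
  have [N H] := nb (e / (nc c + 1)) (divr_gt0 e0 c1).
  exists N => n hn; rewrite Normc.normcM.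
  have := H n hn; rewrite ltr_pdivlMr // => h.
  apply: le_lt_trans h; rewrite mulrC ler_wpM2l ?nc_ge0 // lerDl ler01 //.
- by [].
- by [].
Qed.

Lemma hull_sub (S : set (nat -> C)) : S `<=` calkin_hull S.
Proof. by move=> x Sx J _ /(_ x Sx). Qed.

Lemma hull_min (S J : set (nat -> C)) : calkin J -> S `<=` J -> calkin_hull S `<=` J.
Proof. by move=> cJ SJ x /(_ J cJ SJ). Qed.

Lemma hull_calkin (S : set (nat -> C)) :
  S `<=` @null_seq R -> calkin (calkin_hull S).
Proof.
move=> SN; split.
- by move=> J [].
- by move=> b g Hb Hg J cJ SJ; case: (cJ) => _ Hadd _ _ _; apply: Hadd; [apply: Hb|apply: Hg].
- by move=> c b Hb J cJ SJ; case: (cJ) => _ _ Hs _ _; apply: Hs; apply: Hb.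
- by move=> b Hb; apply: (Hb _ calkin_null SN).
- move=> g b Hg nb Hbg J cJ SJ; case: (cJ) => _ _ _ _ Hsol.
  by apply: (Hsol g) => //; apply: Hg.
Qed.

End Seqs.

Section Tensor.
Variable R : realType.
Local Notation C := (complex R).
Local Notation nc := (@Normc.normc R).

Definition ft (b g : nat -> C) := fun p : nat * nat => nc (b p.1) * nc (g p.2).

Lemma ft_bound (b g : nat -> C) : null_seq b -> null_seq g ->
  exists2 B, 0 <= B & forall p, ft b g p <= B.
Proof.
move=> /null_bounded [B1 B10 H1] /null_bounded [B2 B20 H2].
exists (B1 * B2); first by rewrite mulr_ge0.
by move=> p; rewrite /ft ler_pM ?nc_ge0.
Qed.

Lemma pairs_uniq n : uniq [seq (i, 0%N) | i <- iota 0 n] /\ size [seq (i, 0%N) | i <- iota 0 n] = n.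
Proof.
split; last by rewrite size_map size_iota.
by rewrite map_inj_uniq ?iota_uniq // => i j [].
Qed.

Lemma tensor_ge0 (b g : nat -> C) n : null_seq b -> null_seq g -> 0 <= tensor b g n.
Proof.
move=> nb ng; have [B B0 HB] := ft_bound nb ng.
have [u sz] := pairs_uniq n.+1.
apply: (@drearr_ge0 _ _ _ B _ _ _ HB u sz) => p.
by rewrite mulr_ge0 ?nc_ge0.
Qed.

Lemma tensor_dec (b g : nat -> C) n m : null_seq b -> null_seq g ->
  (n <= m)%N -> tensor b g m <= tensor b g n.
Proof.
move=> nb ng nm; have [B B0 HB] := ft_bound nb ng.
by apply: (drearr_mono HB nm); apply: tensor_ge0.
Qed.

Lemma rearr_tensor (b g : nat -> C) n : null_seq b -> null_seq g ->
  rearr (cseq (tensor b g)) n = tensor b g n.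
Proof.
move=> nb ng; apply: rearr_cseq => [k|k m]; first exact: tensor_ge0.
exact: tensor_dec.
Qed.

Lemma rank_le (c : nat -> C) (L : seq nat) i : null_seq c -> uniq L ->
  sorted (fun i j => nc (c j) <= nc (c i)) L -> i \in L ->
  nc (c i) <= rearr c (index i L).
Proof.
move=> /null_bounded [B B0 HB] uL sL iL.
have trans : transitive (fun i j => nc (c j) <= nc (c i)).
  by move=> y x z h1 h2; apply: le_trans h2 h1.
have refl : reflexive (fun i j => nc (c j) <= nc (c i)) by move=> x; apply: lexx.
have il : (index i L < size L)%N by rewrite index_mem.
apply: (@drearr_ge _ _ _ B _ (take (index i L).+1 L)) => //.
- exact: take_uniq.
- by rewrite size_take; case: ifP => // /negbT h; apply/eqP; rewrite eqn_leq leqNgt h il.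
move=> x /(nthP 0%N) [l lt <-].
have {}lt : (l < (index i L).+1)%N.
  by move: lt; rewrite size_take; case: ifP => // /negbT h lt; apply: leq_trans lt _; rewrite leqNgt.
rewrite nth_take //.
have := @sorted_leq_nth _ _ trans refl 0%N L sL l (index i L).
rewrite nth_index //; apply; rewrite ?inE //.
  exact: leq_trans lt il.
Qed.

Lemma tensor_bound (a : nat -> R) (b g : nat -> C) (m1 m2 : nat) (K1 K2 : R) :
  (forall n, 0 <= a n) -> (forall n m, (n <= m)%N -> a m <= a n) ->
  null_seq (cseq a) ->
  null_seq b -> null_seq g -> (0 < m1)%N -> (0 < m2)%N -> 0 < K1 -> 0 < K2 ->
  (forall k, rearr b k <= K1 * a (k %/ m1)%N) ->
  (forall k, rearr g k <= K2 * a (k %/ m2)%N) ->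
  forall n, tensor b g n <= K1 * K2 * tensor (cseq a) (cseq a) (n %/ (m1 * m2))%N.
Proof.
move=> a0 adec na nb ng m10 m20 K10 K20 Hb Hg n.
have anc : forall j, nc (cseq a j) = a j by move=> j; apply: nc_cseq.
set T := tensor (cseq a) (cseq a) _.
have T0 : 0 <= T by apply: tensor_ge0.
have y0 : 0 <= K1 * K2 * T by rewrite mulr_ge0 // mulr_ge0 // ltW.
apply: drearr_le => // -[s [us ss Hs]].
pose leb := fun i j : nat => nc (b j) <= nc (b i).
pose leg := fun i j : nat => nc (g j) <= nc (g i).
have totb : total leb by move=> i j; apply: le_total.
have totg : total leg by move=> i j; apply: le_total.
pose Bl := sort leb (undup (map fst s)).
pose Gl := sort leg (undup (map snd s)).
have uB : uniq Bl by rewrite sort_uniq undup_uniq.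
have uG : uniq Gl by rewrite sort_uniq undup_uniq.
have sB : sorted leb Bl by apply: sort_sorted.
have sG : sorted leg Gl by apply: sort_sorted.
have inB : forall p, p \in s -> p.1 \in Bl.
  by move=> p ps; rewrite mem_sort mem_undup; apply: map_f.
have inG : forall p, p \in s -> p.2 \in Gl.
  by move=> p ps; rewrite mem_sort mem_undup; apply: map_f.
pose psi := fun p : nat * nat => (index p.1 Bl, index p.2 Gl).
pose phi := fun p : nat * nat => (index p.1 Bl %/ m1, index p.2 Gl %/ m2)%N.
pose s' := undup (map phi s).
have inj : {in s &, injective psi}.
  move=> [p1 p2] [q1 q2] ps qs [e1 e2].
  have /= hp1 := nth_index 0%N (inB _ ps); have /= hq1 := nth_index 0%N (inB _ qs).
  have /= hp2 := nth_index 0%N (inG _ ps); have /= hq2 := nth_index 0%N (inG _ qs).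
  congr pair.
    by rewrite -[p1]hp1 -[q1]hq1 e1.
  by rewrite -[p2]hp2 -[q2]hq2 e2.
have ups : uniq (map psi s) by rewrite map_inj_in_uniq.
pose U := [seq (u, v) | u <- iota 0 m1, v <- iota 0 m2].
pose L := [seq (q.1 * m1 + u.1, q.2 * m2 + u.2)%N | q <- s', u <- U].
have sub : {subset map psi s <= L}.
  move=> x /mapP [p ps ->]; apply/allpairsP.
  exists (phi p, (index p.1 Bl %% m1, index p.2 Gl %% m2)%N); split => /=.
  - by rewrite mem_undup; apply: map_f.
  - by apply/allpairsP; exists (index p.1 Bl %% m1, index p.2 Gl %% m2)%N;
      rewrite /= !mem_iota !add0n !ltn_pmod.
  - by rewrite -!divn_eq.
have szL : size L = (size s' * (m1 * m2))%N by rewrite !size_allpairs !size_iota.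
have hsz : (n.+1 <= size s' * (m1 * m2))%N.
  by rewrite -szL -ss -(size_map psi s); exact: uniq_leq_size ups sub.
have hk : (n %/ (m1 * m2) < size s')%N by rewrite ltn_divLR ?muln_gt0 ?m10.
have Hs' : forall q, q \in s' -> T < ft (cseq a) (cseq a) q.
  move=> q; rewrite mem_undup => /mapP [p ps ->].
  have h := Hs p ps.
  have hb := le_trans (rank_le nb uB sB (inB p ps)) (Hb _).
  have hg := le_trans (rank_le ng uG sG (inG p ps)) (Hg _).
  rewrite /ft !anc /=.
  move: h hb hg; rewrite /ft.
  set xb := nc (b p.1); set xg := nc (g p.2).
  set A := a (index p.1 Bl %/ m1)%N; set G := a (index p.2 Gl %/ m2)%N => h hb hg.
  have xb0 : 0 <= xb by apply: nc_ge0.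
  have xg0 : 0 <= xg by apply: nc_ge0.
  have A0 : 0 <= A by apply: a0.
  have G0 : 0 <= G by apply: a0.
  have h2 : xb * xg <= K1 * A * (K2 * G) by apply: ler_pM.
  have h3 : K1 * K2 * T < K1 * K2 * (A * G).
    apply: lt_le_trans h (le_trans h2 _); rewrite le_eqVlt; apply/orP; left.
    by apply/eqP; rewrite mulrACA.
  by rewrite ltr_pM2l ?mulr_gt0 // in h3.
have P : Pc (ft (cseq a) (cseq a)) T (n %/ (m1 * m2)).
  exists (take (n %/ (m1 * m2)).+1 s'); split.
  - by apply: take_uniq; apply: undup_uniq.
  - by rewrite size_take; case: ifP => // /negbT h; apply/eqP; rewrite eqn_leq leqNgt h hk.
  - by move=> q /mem_take /Hs'.
have [B B0 HB] := ft_bound na na.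
by have := Pc_drearr HB P; rewrite ltxx.
Qed.

End Tensor.
Section Main.
Variable R : realType.
Local Notation C := (complex R).
Local Notation nc := (@Normc.normc R).
Variable a : nat -> R.
Hypothesis a0 : forall n, 0 <= a n.
Hypothesis adec : forall n m, (n <= m)%N -> a m <= a n.
Hypothesis anull : forall e : R, 0 < e -> exists N : nat, forall n, (N <= n)%N -> a n < e.
Variable w : R.
Hypothesis a01 : a 0%N <= 1.
Hypothesis w01 : 0 < w < 1.

Definition dom (b : nat -> C) := null_seq b /\
  exists m K, [/\ (0 < m)%N, 0 < K & forall n, rearr b n <= K * a (n %/ m)].

Lemma null_of_bound (b : nat -> C) m K : (0 < m)%N -> 0 < K ->
  (forall n, nc (b n) <= K * a (n %/ m)) -> null_seq b.
Proof.
move=> m0 K0 Hb e e0; have [N HN] := anull (divr_gt0 e0 K0).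
exists (N * m)%N => n Nn; apply: le_lt_trans (Hb n) _.
have /HN : (N <= n %/ m)%N by rewrite leq_divRL.
by rewrite ltr_pdivlMr // mulrC.
Qed.

Lemma Pc_rearr (b : nat -> C) t n : null_seq b ->
  Pc (fun i => nc (b i)) t n -> t < rearr b n.
Proof. by move=> /null_bounded [B _ HB]; apply: Pc_drearr. Qed.

Lemma dom0 : dom (fun _ => 0).
Proof.
split; first by case: (calkin_null R).
exists 1%N, 1; split => // n; rewrite mul1r divn1.
apply: drearr_le => // -[[|i s] [_ //= _ /(_ i)]].
by rewrite inE eqxx => /(_ isT); rewrite expr0n /= addr0 sqrtr0 ltNge a0.
Qed.

Lemma dom_add b g : dom b -> dom g -> dom (fun n => b n + g n).
Proof.
move=> [nb [m1 [K1 [m10 K10 Hb]]]] [ng [m2 [K2 [m20 K20 Hg]]]].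
split; first by case: (calkin_null R) => _ H _ _ _; apply: H.
exists (2 * m1 * m2)%N, (2 * (K1 + K2)); split.
- by rewrite !muln_gt0 m10 m20.
- by rewrite mulr_gt0 // addr_gt0.
move=> n; set y := _ * _.
have y0 : 0 <= y by rewrite mulr_ge0 // mulr_ge0 // addr_ge0 // ltW.
apply: drearr_le => // /(@Pc_split _ _ _ (fun i => nc (b i)) (fun i => nc (g i))).
have mon1 : a (n./2 %/ m1) <= a (n %/ (2 * m1 * m2)).
  by apply: adec; rewrite -divn2 -divnMA leq_div2l // ?muln_gt0 // leq_pmulr.
have mon2 : a (n./2 %/ m2) <= a (n %/ (2 * m1 * m2)).
  apply: adec; rewrite -divn2 -divnMA -mulnA [(m1 * m2)%N]mulnC mulnA.
  by rewrite leq_div2l // ?muln_gt0 // leq_pmulr.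
move=> /(_ (fun i => le_normcD (b i) (g i))) [P1|P2].
- have h := lt_le_trans (Pc_rearr nb P1) (Hb _).
  have h2 : K1 * a (n./2 %/ m1) <= K1 * a (n %/ (2 * m1 * m2)) by rewrite ler_wpM2l // ltW.
  have ha := a0 (n %/ (2 * m1 * m2)).
  move: h h2 ha; rewrite /y; set A := a (n./2 %/ m1); set A' := a _ => h1 h2 ha.
  nra.
- have h := lt_le_trans (Pc_rearr ng P2) (Hg _).
  have h2 : K2 * a (n./2 %/ m2) <= K2 * a (n %/ (2 * m1 * m2)) by rewrite ler_wpM2l // ltW.
  have ha := a0 (n %/ (2 * m1 * m2)).
  move: h h2 ha; rewrite /y; set A := a (n./2 %/ m2); set A' := a _ => h1 h2 ha.
  nra.
Qed.

Lemma dom_scale (c : C) b : dom b -> dom (fun n => c * b n).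
Proof.
move=> [nb [m [K [m0 K0 Hb]]]].
split; first by case: (calkin_null R) => _ _ H _ _; apply: H.
have c1 : 0 < nc c + 1 by rewrite ltr_wpDl ?nc_ge0.
exists m, ((nc c + 1) * K); split => //; first by rewrite mulr_gt0.
move=> n; set y := _ * _.
have y0 : 0 <= y by rewrite mulr_ge0 // mulr_ge0 // ltW.
apply: drearr_le => // P.
have P' : Pc (fun i => nc (b i)) (y / (nc c + 1)) n.
  apply: (Pc_impl P) => i; rewrite Normc.normcM ltr_pdivrMr // => h.
  apply: lt_le_trans h _; rewrite mulrC ler_wpM2l ?nc_ge0 // lerDl ler01 //.
have := lt_le_trans (Pc_rearr nb P') (Hb n).
by rewrite /y mulrC mulrA mulKf ?gt_eqF // ltxx.
Qed.

Lemma calkin_dom : calkin dom.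
Proof.
split.
- exact: dom0.
- exact: dom_add.
- exact: dom_scale.
- by move=> b [].
- move=> g b [ng [m [K [m0 K0 Hg]]]] nb Hbg; split => //.
  by exists m, K; split => // n; apply: le_trans (Hbg n) (Hg n).
Qed.

Lemma dom_a : dom (cseq a).
Proof.
have anc : forall n, nc (cseq a n) = a n by move=> n; apply: nc_cseq.
split.
  by apply: (@null_of_bound _ 1%N 1) => // n; rewrite anc mul1r divn1.
exists 1%N, 1; split => // n; rewrite mul1r divn1 rearr_cseq //.
Qed.

Definition dk (m : nat) (K : R) (k : nat) : nat -> C :=
  fun n => if (n %% m == k)%N then cseq (fun j => K * a j) (n %/ m) else 0.

Lemma nc_dk m K k n : 0 <= K -> nc (dk m K k n) =
  if (n %% m == k)%N then K * a (n %/ m) else 0.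
Proof.
move=> K0; rewrite /dk; case: ifP => _; first by rewrite nc_cseq // mulr_ge0.
by rewrite /Normc.normc /= expr0n /= addr0 sqrtr0.
Qed.

Lemma dk_in (J : set (nat -> C)) m K k : calkin J -> J (cseq a) -> (0 < m)%N -> 0 < K ->
  J (dk m K k).
Proof.
move=> cJ Ja m0 K0; have K0' := ltW K0; case: (cJ) => _ _ Hsc _ Hsol.
have JK : J (fun n => K%:C%C * cseq a n) by apply: Hsc.
have ncK : forall n, nc (K%:C%C * cseq a n) = K * a n.
  by move=> n; rewrite Normc.normcM nc_real nc_cseq // ger0_norm // ltW.
apply: (Hsol _ _ JK).
  apply: (@null_of_bound _ m K) => // n; rewrite nc_dk  //.
  by case: ifP => _; rewrite ?lexx // mulr_ge0.
move=> n; rewrite (rearr_nc _ ncK) drearr_nonincr; first last.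
- by move=> i j ij; rewrite ler_wpM2l  // adec.
- by move=> i; rewrite mulr_ge0 // ltW.
have y0 : 0 <= K * a n by rewrite mulr_ge0 // ltW.
apply: drearr_le => // -[s [us ss Hs]].
have Hs' : forall i, i \in s -> (i %% m == k)%N /\ K * a n < K * a (i %/ m).
  move=> i /Hs; rewrite nc_dk //; case: ifP => [e h|_ h]; first by split.
  by move: h; rewrite ltNge y0.
have inj : {in s &, injective (fun i => i %/ m)%N}.
  move=> i j /Hs' [/eqP hi _] /Hs' [/eqP hj _] e.
  by rewrite (divn_eq i m) (divn_eq j m) e hi hj.
have ui : uniq (map (fun i => i %/ m)%N s) by rewrite map_inj_in_uniq.
have sz : size (map (fun i => i %/ m)%N s) = n.+1 by rewrite size_map.
have [j /mapP [i iS ->] nj] := uniq_big ui sz.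
have [_ h] := Hs' i iS.
have : K * a (i %/ m) <= K * a n by rewrite ler_wpM2l  // adec.
by rewrite leNgt h.
Qed.

Lemma dom_in (J : set (nat -> C)) b : calkin J -> J (cseq a) -> dom b -> J b.
Proof.
move=> cJ Ja [nb [m [K [m0 K0 Hb]]]]; have K0' := ltW K0.
case: (cJ) => J0 Hadd _ _ Hsol.
pose D := fun j n => \sum_(0 <= k < j) dk m K k n.
have JD : forall j, J (D j).
  elim=> [|j IH].
    have -> : D 0%N = (fun _ => 0) by apply: funext => n; rewrite /D big_geq.
    exact: J0.
  have -> : D j.+1 = (fun n => D j n + dk m K j n).
    by apply: funext => n; rewrite /D big_nat_recr.
  by apply: Hadd => //; apply: dk_in.
apply: (Hsol _ _ (JD m)) => // n.
apply: le_trans (Hb n) _.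
have Dv : forall i, nc (D m i) = K * a (i %/ m).
  move=> i; rewrite /D big_mkord.
  rewrite (bigD1 (Ordinal (ltn_pmod i m0))) //= big1 ?addr0.
    by rewrite nc_dk  // eqxx.
  move=> k hk; rewrite /dk ifF //; apply/negbTE; apply: contra hk => /eqP e.
  by apply/eqP/val_inj => /=; rewrite e.
have [B B0 HB] : exists2 B, 0 <= B & forall i, nc (D m i) <= B.
  exists (K * a 0%N); first by rewrite mulr_ge0 // ltW.
  by move=> i; rewrite Dv ler_wpM2l  // adec.
apply: (@drearr_ge _ _ _ B _ (iota 0 n.+1)) => //.
- exact: iota_uniq.
- by rewrite size_iota.
- move=> i; rewrite mem_iota add0n ltnS => ni; rewrite Dv ler_wpM2l  //.
  by apply: adec; apply: leq_div2r.
Qed.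

Lemma principal_dom b : principal (cseq a) b <-> dom b.
Proof.
split.
  by move=> /(_ dom calkin_dom) H; apply: H => x ->; apply: dom_a.
move=> db J cJ /(_ (cseq a) erefl) Ja; exact: dom_in.
Qed.

Lemma w0 : 0 < w. Proof. by case/andP: w01. Qed.
Lemma w1 : w < 1. Proof. by case/andP: w01. Qed.

Lemma cnt_ex j : exists m, a m <= w ^+ j.
Proof.
have [N HN] := anull (exprn_gt0 j w0).
by exists N; apply: ltW; apply: HN.
Qed.

Definition cnt j := ex_minn (cnt_ex j).

Lemma cntE j x : (x < cnt j)%N = (w ^+ j < a x).
Proof.
rewrite /cnt; case: ex_minnP => c hc hmin.
apply/idP/idP => h.
  rewrite ltNge; apply/negP => hx.
  by move: (hmin x hx); rewrite leqNgt h.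
rewrite ltnNge; apply/negP => cx.
by move: (le_trans (adec cx) hc); rewrite leNgt h.
Qed.

Lemma cnt0 : cnt 0 = 0%N.
Proof. by apply/eqP; rewrite -leqn0 leqNgt cntE expr0 ltNge a01. Qed.

Lemma cnt_mono j k : (j <= k)%N -> (cnt j <= cnt k)%N.
Proof.
move=> jk; rewrite leqNgt; apply/negP; rewrite cntE => h.
have h2 : w ^+ k <= w ^+ j by rewrite ler_iXn2l ?w0 ?w1.
by move: (le_lt_trans h2 h); rewrite -cntE ltnn.
Qed.

Lemma a_le1 x : a x <= 1.
Proof. by apply: le_trans (adec (leq0n x)) a01. Qed.

Lemma Kw_cnt p : Kw w a p = (cnt p.+1 - cnt p)%N.
Proof.
have cm : (cnt p <= cnt p.+1)%N by apply: cnt_mono.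
rewrite /Kw.
have -> : [set m : nat | w ^+ p.+1 < a m <= w ^+ p] =
    [set` [fset x in iota (cnt p) (cnt p.+1 - cnt p)]%fset].
  apply/seteqP; split => x /=; rewrite !inE mem_iota subnKC //.
    by move=> /andP[h1 h2]; rewrite cntE h1 andbT leqNgt cntE ltNge negbK.
  by move=> /andP[h1 h2]; rewrite -cntE h2 /= leNgt -cntE -leqNgt h1.
by rewrite set_fsetK card_fseq undup_id ?iota_uniq // size_iota.
Qed.

Lemma Kwt_cnt n : Kwt w a n = cnt n.+1.
Proof.
rewrite /Kwt.
under eq_bigr do rewrite Kw_cnt.
rewrite -(big_mkord xpredT (fun i => cnt i.+1 - cnt i)%N).
by rewrite telescope_sumn ?cnt0 ?subn0 // => x y; apply: cnt_mono.
Qed.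

Definition chi p x := (cnt p <= x < cnt p.+1)%N.

Lemma sum_chi p N : \sum_(x < N) (chi p x : nat) = (minn (cnt p.+1) N - minn (cnt p) N)%N.
Proof.
have cm : (cnt p <= cnt p.+1)%N by apply: cnt_mono.
elim: N => [|N IH]; first by rewrite big_ord0 !minn0.
rewrite big_ord_recr /= IH /chi.
case: (leqP (cnt p) N) => h1; case: (ltnP N (cnt p.+1)) => h2 /=; lia.
Qed.

Lemma chi_uniq p q x : chi p x -> chi q x -> p = q.
Proof.
rewrite /chi => /andP[h1 h2] /andP[h3 h4].
case: (ltngtP p q) => // pq.
  have := cnt_mono pq; lia.
have := cnt_mono pq; lia.
Qed.

Lemma chi_ex n x : (x < cnt n.+1)%N -> exists2 p, (p <= n)%N & chi p x.
Proof.
elim: n => [|n IH] h.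
  by exists 0%N => //; rewrite /chi cnt0 h.
case: (ltnP x (cnt n.+1)) => h'.
  by have [p pn cp] := IH h'; exists p => //; apply: leqW.
by exists n.+1 => //; rewrite /chi h' h.
Qed.

Lemma Kw_sum n p : (p <= n)%N -> Kw w a p = \sum_(x < cnt n.+1) (chi p x : nat).
Proof.
move=> pn; rewrite Kw_cnt sum_chi.
have h1 := cnt_mono (ltnW (leq_ltn_trans pn (ltnSn n))).
have h2 : (cnt p.+1 <= cnt n.+1)%N by apply: cnt_mono.
by rewrite !(minn_idPl _).
Qed.

Lemma sum_delta k (p0 : nat) (F : nat -> nat) :
  \sum_(j < k) ((nat_of_ord j == p0) * F j)%N = ((p0 < k) * F p0)%N.
Proof.
case: (ltnP p0 k) => h.
  rewrite (bigD1 (Ordinal h)) //= eqxx.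
  rewrite mul1n big1; first by rewrite addr0.
  move=> j hj; suff -> : (nat_of_ord j == p0) = false by [].
  apply/negbTE; apply: contra hj => /eqP e; apply/eqP/val_inj => /=; exact: e.
rewrite big1 // => j _; suff -> : (nat_of_ord j == p0) = false by [].
by apply/negbTE; rewrite neq_ltn (leq_trans (ltn_ord j) h).
Qed.

Definition Qp n x y := [exists p : 'I_n.+1, exists q : 'I_n.+1,
  [&& (p + q <= n)%N, chi p x & chi q y]].

Lemma inner_sum n x y : (x < cnt n.+1)%N -> (y < cnt n.+1)%N ->
  \sum_(i < n.+1) \sum_(j < i.+1) (chi j x * chi (i - j) y)%N = Qp n x y.
Proof.
move=> hx hy.
have [p0 p0n cp] := chi_ex hx; have [q0 q0n cq] := chi_ex hy.
have ex : forall j, chi j x = (j == p0).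
  move=> j; apply/idP/eqP => [h|->] //; exact: chi_uniq h cp.
have ey : forall j, chi j y = (j == q0).
  move=> j; apply/idP/eqP => [h|->] //; exact: chi_uniq h cq.
have -> : Qp n x y = (p0 + q0 <= n)%N.
  apply/existsP/idP => [[p /existsP [q /and3P [h1 h2 h3]]]|h].
    by rewrite -(chi_uniq h2 cp) -(chi_uniq h3 cq).
  exists (Ordinal (leq_ltn_trans p0n (ltnSn n))); apply/existsP.
  by exists (Ordinal (leq_ltn_trans q0n (ltnSn n))); rewrite /= h cp cq.
under eq_bigr => i _.
  under eq_bigr do rewrite ex ey.
  rewrite (sum_delta i.+1 p0 (fun j => ((i - j)%N == q0) : nat)).
  over.
have e : forall i : 'I_n.+1, ((p0 < i.+1) * ((i - p0)%N == q0))%N = ((nat_of_ord i == (p0 + q0)%N) * 1)%N.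
  move=> i; rewrite muln1; case: (ltnP p0 i.+1) => h /=.
    rewrite mul1n; congr nat_of_bool; apply/eqP/eqP; lia.
  by apply/esym/eqP; lia.
rewrite (eq_bigr _ (fun i _ => e i)) (sum_delta n.+1 (p0 + q0) (fun _ => 1%N)).
by rewrite muln1 ltnS.
Qed.


Lemma Mwt_sum n : Mwt w a n = \sum_(x < cnt n.+1) \sum_(y < cnt n.+1) (Qp n x y : nat).
Proof.
rewrite /Mwt /Mw.
set N := cnt n.+1.
transitivity (\sum_(i < n.+1) \sum_(j < i.+1)
    \sum_(x < N) \sum_(y < N) (chi j x * chi (i - j) y)%N).
  apply: eq_bigr => i _; apply: eq_bigr => j _.
  have hi := ltn_ord i; have hj := ltn_ord j.
  rewrite (@Kw_sum n j); last lia.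
  rewrite (@Kw_sum n (i - j)); last lia.
  by rewrite big_distrlr.
under eq_bigr => i _ do rewrite exchange_big.
rewrite exchange_big.
under eq_bigr => x _ do under eq_bigr => i _ do rewrite exchange_big.
under eq_bigr => x _ do rewrite exchange_big.
apply: eq_bigr => x _; apply: eq_bigr => y _.
exact: inner_sum (ltn_ord x) (ltn_ord y).
Qed.

Lemma count_allpairs (P : pred (nat * nat)) (s t : seq nat) :
  count P [seq (x, y) | x <- s, y <- t] = \sum_(x <- s) count (fun y => P (x, y)) t.
Proof.
elim: s => [|x s IH]; first by rewrite big_nil.
by rewrite allpairs_cons count_cat count_map IH big_cons.
Qed.

Lemma count_iota (P : pred nat) N : count P (iota 0 N) = \sum_(y < N) (P y : nat).
Proof.
rewrite -sum1_count big_mkcond /= -(big_mkord xpredT (fun y => (P y : nat))).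
by rewrite /index_iota subn0; apply: eq_bigr => i _; case: (P i).
Qed.

Definition Lp n := [seq p <- [seq (x, y) | x <- iota 0 (cnt n.+1), y <- iota 0 (cnt n.+1)]
   | Qp n p.1 p.2].

Lemma Lp_uniq n : uniq (Lp n).
Proof.
apply: filter_uniq; apply: allpairs_uniq; try exact: iota_uniq.
by move=> [x1 y1] [x2 y2] _ _ /= [-> ->].
Qed.

Lemma Lp_size n : size (Lp n) = Mwt w a n.
Proof.
rewrite size_filter Mwt_sum count_allpairs.
rewrite -(big_mkord xpredT (fun x => \sum_(y < cnt n.+1) (Qp n x y : nat))).
rewrite /index_iota subn0; apply: eq_bigr => x _; rewrite count_iota; apply: eq_bigr => y _ //.
Qed.

Lemma Lp_gt n p : p \in Lp n -> w ^+ n.+2 < a p.1 * a p.2.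
Proof.
rewrite mem_filter => /andP[/existsP [i /existsP [j /and3P [hij hi hj]]] _].
move: hi hj; rewrite /chi => /andP[_ hi] /andP[_ hj].
rewrite cntE in hi; rewrite cntE in hj.
have h : w ^+ i.+1 * w ^+ j.+1 < a p.1 * a p.2.
  by apply: ltr_pM => //; apply: exprn_ge0; apply: ltW; apply: w0.
apply: le_lt_trans h; rewrite -exprD ler_iXn2l ?w0 ?w1 //; lia.
Qed.

Lemma Lp_max n (s : seq (nat * nat)) : uniq s ->
  (forall p, p \in s -> w ^+ n.+1 < a p.1 * a p.2) -> (size s <= Mwt w a n)%N.
Proof.
move=> us Hs; rewrite -Lp_size; apply: uniq_leq_size => // -[x y] /Hs /= h.
have hx : (x < cnt n.+1)%N.
  by rewrite cntE; apply: lt_le_trans h _; apply: ler_piMr => //; apply: a_le1.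
have hy : (y < cnt n.+1)%N.
  by rewrite cntE; apply: lt_le_trans h _; apply: ler_piMl => //; apply: a_le1.
rewrite mem_filter /=; apply/andP; split; last first.
  by apply/allpairsP; exists (x, y); rewrite !mem_iota /= hx hy.
have [p0 p0n cp] := chi_ex hx; have [q0 q0n cq] := chi_ex hy.
have ax : a x <= w ^+ p0 by move: cp; rewrite /chi leqNgt cntE -leNgt => /andP[].
have ay : a y <= w ^+ q0 by move: cq; rewrite /chi leqNgt cntE -leNgt => /andP[].
have : a x * a y <= w ^+ (p0 + q0) by rewrite exprD ler_pM.
move=> /(lt_le_trans h); rewrite ltr_iXn2l ?w0 ?w1 // => hpq.
apply/existsP; exists (Ordinal (leq_ltn_trans p0n (ltnSn n))); apply/existsP.
exists (Ordinal (leq_ltn_trans q0n (ltnSn n))); by rewrite /= cp cq andbT andbT -ltnS.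
Qed.


Lemma bern (u : R) c : 0 <= u -> 1 + c%:R * u <= (1 + u) ^+ c.
Proof.
move=> u0; elim: c => [|c IH]; first by rewrite mul0r addr0 expr0.
have h := ler_wpM2l (ltW (ltr_wpDr u0 ltr01)) IH.
rewrite exprS -addn1 natrD.
have c0 : 0 <= c%:R :> R by apply: ler0n.
apply: le_trans h; nra.
Qed.

Lemma pow_small (K : R) : exists c : nat, K * w ^+ c <= 1.
Proof.
have w0' := w0; have w1' := w1.
pose u := w^-1 - 1.
have u0 : 0 < u by rewrite /u subr_gt0 invf_gt1.
have K0 : 0 <= `|K| / u by rewrite divr_ge0 // ltW.
exists (Num.Def.archi_bound (`|K| / u)).
set c := Num.Def.archi_bound _.
have hc := archi_boundP K0; rewrite -/c in hc.
have h1 : `|K| < c%:R * u by rewrite -ltr_pdivrMr.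
have h2 := bern c (ltW u0).
have e : 1 + u = w^-1 by rewrite /u addrC subrK.
rewrite e exprVn in h2.
have wc : 0 < w ^+ c by apply: exprn_gt0.
have : K < (w ^+ c)^-1 by apply: le_lt_trans (ler_norm K) _; apply: lt_le_trans h1 _; apply: le_trans h2; rewrite lerDr ler01.
rewrite -(ltr_pM2r wc) mulVf ?gt_eqF // => h; exact: ltW.
Qed.

Lemma pow_lt (t : R) : 0 < t -> exists j, w ^+ j < t.
Proof.
move=> t0; have [c hc] := pow_small (2 / t).
exists c; have wc : 0 < w ^+ c by apply: exprn_gt0; apply: w0.
move: hc; rewrite mulrAC ler_pdivrMr // mul1r => h.
lra.
Qed.

Definition Taa := tensor (cseq a) (cseq a).

Lemma na : null_seq (cseq a). Proof. by case: dom_a. Qed.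

Lemma anc j : nc (cseq a j) = a j. Proof. exact: nc_cseq. Qed.

Lemma faa_le1 p : ft (cseq a) (cseq a) p <= 1.
Proof. by rewrite /ft !anc; apply: mulr_ile1 => //; apply: a_le1. Qed.

Lemma Taa_le1 n : Taa n <= 1.
Proof. by apply: drearr_ub => //; apply: faa_le1. Qed.

Lemma two_to_three : dom (cseq Taa) ->
  exists (r : nat) (Cc : R), 0 < Cc /\
    forall n : nat, ((Mwt w a n)%:R <= Cc * (Kwt w a (n + r))%:R).
Proof.
move=> [nT [m [K [m0 K0 H]]]].
have HT : forall k, Taa k <= K * a (k %/ m)%N.
  by move=> k; rewrite /Taa -rearr_tensor; [apply: H | apply: na | apply: na].
have [c hc] := pow_small K.
exists c.+1, m%:R; split; first by rewrite ltr0n.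
move=> n.
case hM : (Mwt w a n) => [|k]; first by rewrite mulr_ge0 // ler0n.
have P : Pc (ft (cseq a) (cseq a)) (w ^+ n.+2) k.
  exists (Lp n); split; [exact: Lp_uniq | by rewrite Lp_size hM |].
  by move=> p /Lp_gt; rewrite /ft !anc.
have h1 := lt_le_trans (Pc_drearr faa_le1 P) (HT k).
have wn : 0 < w ^+ n.+2 by apply: exprn_gt0; apply: w0.
have h2 : w ^+ (n.+2 + c) < a (k %/ m)%N.
  rewrite exprD -(ltr_pM2l K0); apply: le_lt_trans h1.
  by rewrite mulrCA; apply: ler_piMr => //; apply: ltW.
have h3 : (k %/ m < cnt (n + c.+1).+1)%N by rewrite cntE; rewrite addnS -addSn -addSn.
rewrite Kwt_cnt -natrM ler_nat.
by move: h3; rewrite ltn_divLR // mulnC.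
Qed.

Lemma three_to_two :
  (exists (r : nat) (Cc : R), 0 < Cc /\
    forall n : nat, ((Mwt w a n)%:R <= Cc * (Kwt w a (n + r))%:R)) ->
  dom (cseq Taa).
Proof.
move=> [r [Cc [C0 HM]]].
have C0' : 0 <= Cc by apply: ltW.
pose m := Num.Def.archi_bound Cc.
have hm : Cc < m%:R by apply: archi_boundP.
have m0 : (0 < m)%N by rewrite -(ltr0n R); apply: lt_trans hm.
have wr : 0 < w ^+ r.+1 by apply: exprn_gt0; apply: w0.
pose K := (w ^+ r.+1)^-1.
have K0 : 0 < K by rewrite invr_gt0.
have T0 : forall k, 0 <= Taa k by move=> k; apply: tensor_ge0; apply: na.
have HT : forall k, Taa k <= K * a (k %/ m)%N.
  move=> k; rewrite leNgt; apply/negP => hk.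
  have Tk : 0 < Taa k by apply: le_lt_trans hk; rewrite mulr_ge0 // ltW.
  have exj : exists j, w ^+ j < Taa k by apply: pow_lt.
  case: (ex_minnP exj) => -[|n] hn hmin.
    by move: hn; rewrite expr0 ltNge Taa_le1.
  have hn' : Taa k <= w ^+ n.
    rewrite leNgt; apply/negP => /hmin; rewrite ltnn //.
  have [s [us ss Hs]] := drearr_gtP (exprn_ge0 n.+1 (ltW w0)) hn.
  have hs : (size s <= Mwt w a n)%N.
    by apply: Lp_max => // p /Hs; rewrite /ft !anc.
  rewrite ss in hs.
  have h1 : (k.+1)%:R <= m%:R * (Kwt w a (n + r))%:R :> R.
    have h0 : (k.+1)%:R <= (Mwt w a n)%:R :> R by rewrite ler_nat.
    apply: le_trans h0 (le_trans (HM n) _).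
    by apply: ler_wpM2r; [exact: ler0n | exact: ltW hm].
  rewrite -natrM ler_nat Kwt_cnt in h1.
  have h2 : (k %/ m < cnt (n + r).+1)%N by rewrite ltn_divLR // mulnC.
  rewrite cntE in h2.
  have : w ^+ n < K * a (k %/ m)%N.
    have e : w ^+ n = K * w ^+ (n + r).+1.
      by rewrite -addnS exprD mulrCA mulVf ?mulr1 // gt_eqF.
    by rewrite e ltr_pM2l.
  move=> /(le_lt_trans hn'); rewrite ltNge => /negP; apply; exact: ltW.
split.
  apply: (@null_of_bound _ m K) => // n; rewrite nc_cseq //.
exists m, K; split => // k; rewrite /Taa rearr_tensor //; exact: na.
Qed.

Lemma dom_tensor b g : dom (cseq Taa) -> dom b -> dom g -> dom (cseq (tensor b g)).
Proof.
move=> [nT [m0 [K0 [m00 K00 H0]]]] [nb [m1 [K1 [m10 K10 Hb]]]] [ng [m2 [K2 [m20 K20 Hg]]]].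
have HT : forall k, Taa k <= K0 * a (k %/ m0)%N.
  by move=> k; rewrite /Taa -rearr_tensor; [apply: H0 | apply: na | apply: na].
have Hbd : forall n, tensor b g n <= K1 * K2 * K0 * a (n %/ (m1 * m2 * m0))%N.
  move=> n; apply: le_trans (tensor_bound a0 adec na nb ng m10 m20 K10 K20 Hb Hg n) _.
  rewrite -!mulrA; apply: ler_wpM2l; first exact: ltW.
  apply: ler_wpM2l; first exact: ltW.
  by have := HT (n %/ (m1 * m2))%N; rewrite -divnMA.
have M0 : (0 < m1 * m2 * m0)%N by rewrite !muln_gt0 m10 m20 m00.
have KK : 0 < K1 * K2 * K0 by rewrite !mulr_gt0.
split.
  by apply: (null_of_bound M0 KK) => n; rewrite nc_cseq //; apply: tensor_ge0.
exists (m1 * m2 * m0)%N, (K1 * K2 * K0); split => // n.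
by rewrite rearr_tensor.
Qed.

Lemma one_two : stable (principal (cseq a)) <->
  principal (cseq a) (cseq (tensor (cseq a) (cseq a))).
Proof.
have Ia : principal (cseq a) (cseq a) by apply: hull_sub.
split.
  move=> st; rewrite -st; apply: hull_sub.
  by exists (cseq a), (cseq a); split.
move=> /principal_dom H2.
set I := principal (cseq a).
set Ts := [set h | exists b g, [/\ I b, I g & h = cseq (tensor b g)]].
have TsI : Ts `<=` dom.
  by move=> x [b [g [/principal_dom db /principal_dom dg ->]]]; apply: dom_tensor.
have cI : calkin I.
  by apply: hull_calkin => x ->; apply: na.
have cT : calkin (calkin_hull Ts).
  by apply: hull_calkin => x /TsI [].
rewrite /stable; apply/seteqP; split.
  apply: hull_min => // x /TsI; exact: (proj2 (principal_dom x)).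
move=> x /principal_dom dx; apply: (dom_in cT) => //.
case: (eqVneq (a 0%N) 0) => ha.
  have az : forall n, a n = 0 by move=> n; apply/le_anti; rewrite a0 -ha adec.
  have -> : cseq a = (fun _ => 0).
    by apply: funext => n; rewrite /cseq az.
  by case: cT.
have apos : 0 < a 0%N by rewrite lt_def ha a0.
pose ind := fun n : nat => if n == 0%N then (1 : R) else 0.
have ind0 : forall n, 0 <= ind n by move=> n; rewrite /ind; case: ifP.
have inddec : forall n m, (n <= m)%N -> ind m <= ind n.
  move=> n m nm; rewrite /ind; case: ifP => hm; case: ifP => hn //.
  by move: nm; rewrite (eqP hm) leqn0 hn.
have indb : forall n, ind n <= (a 0%N)^-1 * a (n %/ 1)%N.
  move=> n; rewrite divn1 /ind; case: ifP => [/eqP ->|_].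
    by rewrite mulVf ?gt_eqF.
  by rewrite mulr_ge0 // invr_ge0 ltW.
have de : dom (cseq ind).
  split.
    by apply: (@null_of_bound _ 1%N (a 0%N)^-1) => // [|n]; rewrite ?invr_gt0 // nc_cseq.
  exists 1%N, (a 0%N)^-1; split => //; first by rewrite invr_gt0.
  by move=> n; rewrite rearr_cseq.
have Ie : I (cseq ind) by apply/principal_dom.
have ne : null_seq (cseq ind) by case: de.
have Tt : calkin_hull Ts (cseq (tensor (cseq a) (cseq ind))).
  by apply: hull_sub; exists (cseq a), (cseq ind); split.
case: cT => _ _ _ _ Hsol.
apply: (Hsol _ _ Tt na) => n.
have -> : rearr (cseq (tensor (cseq a) (cseq ind))) n = tensor (cseq a) (cseq ind) n.
  by apply: rearr_tensor => //; apply: na.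
rewrite rearr_cseq //.
have [B B0 HB] := ft_bound na ne.
have [u sz] := pairs_uniq n.+1.
apply: (drearr_ge HB u sz) => p; case/mapP => i; rewrite mem_iota add0n ltnS => ni ->.
by rewrite /ft !anc nc_cseq ?ind0 //= /ind eqxx mulr1; apply: adec.
Qed.

Lemma main_thm :
  [/\ (stable (principal (cseq a)) <-> principal (cseq a) (cseq (tensor (cseq a) (cseq a)))),
      (principal (cseq a) (cseq (tensor (cseq a) (cseq a))) <->
         exists (r : nat) (Cc : R), 0 < Cc /\
           forall n : nat, ((Mwt w a n)%:R <= Cc * (Kwt w a (n + r))%:R))
    & (stable (principal (cseq a)) <->
         exists (r : nat) (Cc : R), 0 < Cc /\
           forall n : nat, ((Mwt w a n)%:R <= Cc * (Kwt w a (n + r))%:R))].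
Proof.
have e23 : principal (cseq a) (cseq (tensor (cseq a) (cseq a))) <->
         exists (r : nat) (Cc : R), 0 < Cc /\
           forall n : nat, ((Mwt w a n)%:R <= Cc * (Kwt w a (n + r))%:R).
  split.
    by move=> /principal_dom; apply: two_to_three.
  by move=> /three_to_two /principal_dom.
split => //; first exact: one_two.
by rewrite one_two.
Qed.

End Main.

Unset Implicit Arguments.
Theorem theorem2p8 (R : realType) (a : nat -> R) (w : R) :
  (forall n, 0 <= a n) ->
  (forall n m, (n <= m)%N -> a m <= a n) ->
  (forall e : R, 0 < e -> exists N : nat, forall n, (N <= n)%N -> a n < e) ->
  a 0%N <= 1 ->
  0 < w < 1 ->
  [/\ (stable (principal (cseq a)) <-> principal (cseq a) (cseq (tensor (cseq a) (cseq a)))),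
      (principal (cseq a) (cseq (tensor (cseq a) (cseq a))) <->
         exists (r : nat) (C : R), 0 < C /\
           forall n : nat, ((Mwt w a n)%:R <= C * (Kwt w a (n + r))%:R))
    & (stable (principal (cseq a)) <->
         exists (r : nat) (C : R), 0 < C /\
           forall n : nat, ((Mwt w a n)%:R <= C * (Kwt w a (n + r))%:R))].
Proof.
move=> h0 h1 h2 h3 h4.
exact: (@main_thm R a h0 h1 h2 w h3 h4).
Qed.
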